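(* For any algebra $(A,e)$ of a weakly cartesian and strictly positive monad $T$ on $\mathsf{Set}$, the bar construction $\mathrm{Bar}(T,A)$ is both inner span complete and split.
   Context: A monad $(T,\eta,\mu)$ on $\mathsf{Set}$ is weakly cartesian if $T$ preserves weak pullbacks and every naturality square of $\eta$ and of $\mu$ is a weak pullback (a commutative square of sets with $f:A\to B$, $g:A\to C$, $m:B\to D$, $n:C\to D$ is a weak pullback if for all $b,c$ with $m(b)=n(c)$ there is $a$ with $f(a)=b$, $g(a)=c$). $T$ is strictly positive if for every set $X$, all $x\in X$ and $\tau\in TTX$, $\mu_X(\tau)=\eta_X(x)$ implies $\tau=\eta_{TX}\eta_X(x)$. The bar construction of a $T$-algebra $(A,e)$ is the simplicial set $X$ with $X_n=T^{n+1}A$, face maps $d_{n,0}=T^ne$ and $d_{n,i}=T^{n-i}\mu_{T^{i-1}A}$ for $1\le i\le n$, and degeneracies $s_{n,i}=T^{n-i+1}\eta_{T^iA}$ for $0\le i\le n$. A simplicial set $X$ is inner span complete if it sends every pushout square in $\Delta$ of two coface maps to a weak pullback in $\mathsf{Set}$ (known to be equivalent to: for $0\le i<j-1\le n-1$, the square $d_{j-1}d_i=d_id_j:X_n\to X_{n-2}$ is a weak pullback). $X$ is split if it sends all pushout squares in $\Delta$ of one coface map and one codegeneracy map to pullbacks in $\mathsf{Set}$; this is known to be equivalent to: for $0\le i<j\le n$ the square $s_{j-1}d_i=d_is_j$ is a pullback, for $0\le j<i\le n$ the square $s_jd_i=d_{i+1}s_j$ is a pullback, and for $0\le i\le n$ the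 square with $\mathrm{id}:X_n\to X_n$, $s_{i+1}s_i:X_n\to X_{n+2}$, $s_i:X_n\to X_{n+1}$, $d_{i+1}:X_{n+2}\to X_{n+1}$ is a pullback. *)

(* Defs.v *)
From Stdlib Require Import Arith.

(** A square   P --f--> B
               |g       |m
               v        v
               C --n--> D                                       *)

Definition is_weak_pullback (P B C D : Type)
  (f : P -> B) (g : P -> C) (m : B -> D) (n : C -> D) : Prop :=
  (forall a, m (f a) = n (g a)) /\
  (forall b c, m b = n c -> exists a, f a = b /\ g a = c).

Definition is_pullback (P B C D : Type)
  (f : P -> B) (g : P -> C) (m : B -> D) (n : C -> D) : Prop :=
  (forall a, m (f a) = n (g a)) /\
  (forall b c, m b = n c -> exists a, (f a = b /\ g a = c) /\
      forall a', f a' = b /\ g a' = c -> a' = a).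

Arguments is_weak_pullback {P B C D} f g m n.
Arguments is_pullback {P B C D} f g m n.

Record Monad := {
  M :> Type -> Type;
  fmap : forall X Y : Type, (X -> Y) -> M X -> M Y;
  eta : forall X : Type, X -> M X;
  mu : forall X : Type, M (M X) -> M X;
  fmap_id : forall X (t : M X), fmap X X (fun x => x) t = t;
  fmap_comp : forall X Y Z (f : X -> Y) (g : Y -> Z) (t : M X),
      fmap X Z (fun x => g (f x)) t = fmap Y Z g (fmap X Y f t);
  eta_nat : forall X Y (f : X -> Y) (x : X), eta Y (f x) = fmap X Y f (eta X x);
  mu_nat : forall X Y (f : X -> Y) (t : M (M X)),
      mu Y (fmap (M X) (M Y) (fmap X Y f) t) = fmap X Y f (mu X t);
  mu_eta_l : forall X (t : M X), mu X (eta (M X) t) = t;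
  mu_eta_r : forall X (t : M X), mu X (fmap X (M X) (eta X) t) = t;
  mu_assoc : forall X (t : M (M (M X))),
      mu X (fmap (M (M X)) (M X) (mu X) t) = mu X (mu (M X) t)
}.

Arguments fmap _ {X Y} f t.
Arguments eta _ {X} x.
Arguments mu _ {X} t.

Set Implicit Arguments.

Definition weakly_cartesian (T : Monad) : Prop :=
  (forall (P B C D : Type) (f : P -> B) (g : P -> C) (m : B -> D) (n : C -> D),
      is_weak_pullback f g m n ->
      is_weak_pullback (fmap T f) (fmap T g) (fmap T m) (fmap T n)) /\
  (forall (X Y : Type) (h : X -> Y),
      is_weak_pullback h (@eta T X) (@eta T Y) (fmap T h)) /\
  (forall (X Y : Type) (h : X -> Y),
      is_weak_pullback (fmap T (fmap T h)) (@mu T X) (@mu T Y) (fmap T h)).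

Definition strictly_positive (T : Monad) : Prop :=
  forall (X : Type) (x : X) (tau : T (T X)),
    mu T tau = eta T x -> tau = eta T (eta T x).

Definition is_algebra (T : Monad) (A : Type) (e : T A -> A) : Prop :=
  (forall a : A, e (eta T a) = a) /\
  (forall t : T (T A), e (fmap T e t) = e (mu T t)).

(** * (Semi-)simplicial data: X : nat -> Type,
    face m i : X (m+1) -> X m   (the face map d_{m+1,i}),
    degen m i : X m -> X (m+1)  (the degeneracy s_{m,i}). *)

(** Inner span completeness, in its index form: for 0 <= i < j-1 <= n-1
    the square d_{j-1} d_i = d_i d_j : X_n -> X_{n-2} is a weak pullback
    (here n = k+2). *)
Definition inner_span_complete (X : nat -> Type)
  (face : forall m : nat, nat -> X (S m) -> X m) : Prop :=
  forall k i j : nat, i + 1 < j -> j <= k + 2 ->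
    is_weak_pullback (face (S k) i) (face (S k) j) (face k (j - 1)) (face k i).

Definition split (X : nat -> Type)
  (face : forall m : nat, nat -> X (S m) -> X m)
  (degen : forall m : nat, nat -> X m -> X (S m)) : Prop :=
  (* 0 <= i < j <= n (n = k+1): s_{j-1} d_i = d_i s_j *)
  (forall k i j : nat, i < j -> j <= S k ->
     is_pullback (face k i) (degen (S k) j) (degen k (j - 1)) (face (S k) i)) /\
  (* 0 <= j < i <= n (n = k+1): s_j d_i = d_{i+1} s_j *)
  (forall k i j : nat, j < i -> i <= S k ->
     is_pullback (face k i) (degen (S k) j) (degen k j) (face (S k) (S i))) /\
  (forall n i : nat, i <= n ->
     is_pullback (fun x : X n => x) (fun x => degen (S n) (S i) (degen n i x))
                 (degen n i) (face (S n) (S i))).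

Fixpoint Tn (T : Monad) (k : nat) (X : Type) : Type :=
  match k with
  | 0 => X
  | S k' => T (Tn T k' X)
  end.

Definition BarX (T : Monad) (A : Type) (n : nat) : Type := Tn T (S n) A.

(** bar_face T e m i : T^{m+2} A -> T^{m+1} A is d_{m+1,i}, where
    d_{n,0} = T^n e and d_{n,i} = T^{n-i} mu_{T^{i-1} A} (1 <= i <= n),
    computed via T^{k+1} f = T (T^k f). *)
Fixpoint bar_face (T : Monad) (A : Type) (e : T A -> A) (m : nat) (i : nat)
  {struct m} : Tn T (S (S m)) A -> Tn T (S m) A :=
  match m return Tn T (S (S m)) A -> Tn T (S m) A with
  | 0 => if Nat.eqb i 0 then fmap T e else @mu T A
  | S m' => if Nat.eqb i (S (S m')) then @mu T (Tn T (S m') A)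
            else fmap T (@bar_face T A e m' i)
  end.

(** bar_degen T A n i : T^{n+1} A -> T^{n+2} A is s_{n,i} = T^{n-i+1} eta_{T^i A}. *)
Fixpoint bar_degen (T : Monad) (A : Type) (n : nat) (i : nat)
  {struct n} : Tn T (S n) A -> Tn T (S (S n)) A :=
  match n return Tn T (S n) A -> Tn T (S (S n)) A with
  | 0 => fmap T (@eta T A)
  | S n' => if Nat.eqb i (S n') then fmap T (@eta T (Tn T (S n') A))
            else fmap T (bar_degen T A n' i)
  end.

(* Main.v *)
Require Import Defs.
From Stdlib Require Import Arith.
From Stdlib Require Import FunctionalExtensionality Lia.

Lemma wp_sym (P B C D : Type) (f : P -> B) (g : P -> C) (m : B -> D) (n : C -> D) :
  is_weak_pullback f g m n -> is_weak_pullback g f n m.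
Proof.
  intros [H1 H2]; split.
  - intro a; symmetry; apply H1.
  - intros b c H. destruct (H2 c b (eq_sym H)) as [a [Ha1 Ha2]]. exists a; auto.
Qed.

Lemma pb_of_wp (P B C D : Type) (f : P -> B) (g : P -> C) (m : B -> D) (n : C -> D) :
  is_weak_pullback f g m n -> (forall a a', g a = g a' -> a = a') ->
  is_pullback f g m n.
Proof.
  intros [H1 H2] Hi; split; auto.
  intros b c H. destruct (H2 b c H) as [a [Ha1 Ha2]]. exists a; split; auto.
  intros a' [_ Hc]. apply Hi. congruence.
Qed.

Lemma pb_of_wp_f (P B C D : Type) (f : P -> B) (g : P -> C) (m : B -> D) (n : C -> D) :
  is_weak_pullback f g m n -> (forall a a', f a = f a' -> a = a') ->
  is_pullback f g m n.
Proof.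
  intros [H1 H2] Hi; split; auto.
  intros b c H. destruct (H2 b c H) as [a [Ha1 Ha2]]. exists a; split; auto.
  intros a' [Hb _]. apply Hi. congruence.
Qed.

Lemma fmap_comp_f (T : Monad) X Y Z (f : X -> Y) (g : Y -> Z) :
  fmap T (fun x => g (f x)) = fun t => fmap T g (fmap T f t).
Proof. apply functional_extensionality; intro; apply fmap_comp. Qed.

Lemma fmap_id_f (T : Monad) X : fmap T (fun x : X => x) = fun t => t.
Proof. apply functional_extensionality; intro; apply fmap_id. Qed.

Lemma face_top T A e m :
  @bar_face T A e (S m) (S (S m)) = @mu T (Tn T (S m) A).
Proof. simpl. rewrite Nat.eqb_refl. reflexivity. Qed.

Lemma face_lift T A e m i : i <> S (S m) ->
  @bar_face T A e (S m) i = fmap T (@bar_face T A e m i).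
Proof. intro H. simpl. apply Nat.eqb_neq in H. rewrite H. reflexivity. Qed.

Lemma face_diag T A e n : @bar_face T A e n (S n) = @mu T (Tn T n A).
Proof. destruct n. reflexivity. apply face_top. Qed.

Lemma face_fmap T A e k i : i <= k ->
  exists h, @bar_face T A e k i = fmap T h.
Proof.
  intro H. destruct k.
  - assert (i = 0) by lia. subst. exists e. reflexivity.
  - rewrite face_lift by lia. eexists; reflexivity.
Qed.

Lemma degen_top T A n :
  @bar_degen T A (S n) (S n) = fmap T (@eta T (Tn T (S n) A)).
Proof. simpl. rewrite Nat.eqb_refl. reflexivity. Qed.

Lemma degen_lift T A n i : i <> S n ->
  @bar_degen T A (S n) i = fmap T (@bar_degen T A n i).
Proof. intro H. simpl. apply Nat.eqb_neq in H. rewrite H. reflexivity. Qed.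

Lemma degen_diag T A n : @bar_degen T A n n = fmap T (@eta T (Tn T n A)).
Proof. destruct n. reflexivity. apply degen_top. Qed.

Lemma degen_fmap T A n i : exists h, @bar_degen T A n i = fmap T h.
Proof.
  destruct n; simpl.
  - eexists; reflexivity.
  - destruct (Nat.eqb i (S n)); eexists; reflexivity.
Qed.

Lemma fmap_ext_id (T : Monad) X (f : X -> X) (t : T X) :
  (forall y, f y = y) -> fmap T f t = t.
Proof.
  intro H. replace f with (fun y : X => y). apply fmap_id.
  apply functional_extensionality; intro; symmetry; auto.
Qed.

Lemma face_degen (T : Monad) (A : Type) (e : T A -> A) (He : @is_algebra T A e) n : forall i x, i <= n ->
  @bar_face T A e n i (@bar_degen T A n i x) = x.
Proof.
  induction n; intros i x Hi.
  - assert (i = 0) by lia. subst. simpl.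
    rewrite <- fmap_comp. apply fmap_ext_id. intro; apply (proj1 He).
  - destruct (Nat.eq_dec i (S n)).
    + subst. rewrite degen_top, face_lift by lia. rewrite face_diag.
      rewrite <- fmap_comp. apply fmap_ext_id. intro; apply mu_eta_l.
    + rewrite degen_lift by lia. rewrite face_lift by lia.
      rewrite <- fmap_comp. apply fmap_ext_id. intro; apply IHn; lia.
Qed.

Lemma isc (T : Monad) (HT : weakly_cartesian T) A e k : forall i j, i + 1 < j -> j <= k + 2 ->
  is_weak_pullback (@bar_face T A e (S k) i) (@bar_face T A e (S k) j)
    (@bar_face T A e k (j - 1)) (@bar_face T A e k i).
Proof.
  induction k; intros i j H1 H2.
  - assert (i = 0 /\ j = 2) as [-> ->] by lia. simpl.
    apply (proj2 (proj2 HT)).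
  - destruct (Nat.eq_dec j (S (S (S k)))).
    + subst. rewrite face_top. replace (S (S (S k)) - 1) with (S (S k)) by lia.
      rewrite face_top. rewrite face_lift by lia.
      destruct (face_fmap T A e (S k) i) as [h Hh]; [lia|].
      rewrite Hh. apply (proj2 (proj2 HT)).
    + rewrite (face_lift T A e (k) (j - 1)) by lia.
      rewrite (face_lift T A e (k) (i)) by lia.
      rewrite (face_lift T A e (S k) (i)) by lia.
      rewrite (face_lift T A e (S k) (j)) by lia.
      apply (proj1 HT). apply IHk; lia.
Qed.

Lemma split1 (T : Monad) (HT : weakly_cartesian T) A e k : forall i j, i < j -> j <= S k ->
  is_weak_pullback (@bar_face T A e k i) (@bar_degen T A (S k) j)
    (@bar_degen T A k (j - 1)) (@bar_face T A e (S k) i).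
Proof.
  induction k; intros i j H1 H2.
  - assert (i = 0 /\ j = 1) as [-> ->] by lia. simpl.
    apply (proj1 HT). apply (proj1 (proj2 HT)).
  - destruct (Nat.eq_dec j (S (S k))).
    + subst. rewrite degen_top. replace (S (S k) - 1) with (S k) by lia.
      rewrite degen_top. rewrite (face_lift T A e (S k) _) by lia.
      destruct (face_fmap T A e (S k) i) as [h Hh]; [lia|].
      rewrite Hh. apply (proj1 HT). apply (proj1 (proj2 HT)).
    + rewrite (face_lift T A e (k) (i)) by lia.
      rewrite (degen_lift T A (S k) (j)) by lia.
      rewrite (degen_lift T A (k) (j - 1)) by lia.
      rewrite (face_lift T A e (S k) (i)) by lia.
      apply (proj1 HT). apply IHk; lia.
Qed.

Lemma split2 (T : Monad) (HT : weakly_cartesian T) A e k : forall i j, j < i -> i <= S k ->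
  is_weak_pullback (@bar_face T A e k i) (@bar_degen T A (S k) j)
    (@bar_degen T A k j) (@bar_face T A e (S k) (S i)).
Proof.
  induction k; intros i j H1 H2.
  - assert (i = 1 /\ j = 0) as [-> ->] by lia. simpl.
    apply wp_sym. apply (proj2 (proj2 HT)).
  - destruct (Nat.eq_dec i (S (S k))).
    + subst. rewrite face_top. rewrite face_top.
      rewrite (degen_lift T A (S k) (j)) by lia.
      destruct (degen_fmap T A (S k) j) as [h Hh]. rewrite Hh.
      apply wp_sym. apply (proj2 (proj2 HT)).
    + rewrite (face_lift T A e (k) (i)) by lia.
      rewrite (degen_lift T A (k) (j)) by lia.
      rewrite (degen_lift T A (S k) (j)) by lia.
      rewrite (face_lift T A e (S k) (S i)) by lia.
      apply (proj1 HT). apply IHk; lia.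
Qed.

Lemma lift3 (T : Monad) (HT : weakly_cartesian T) X Y Z (g1 : Y -> Z) (g2 : X -> Y) (f : Z -> Y) :
  is_weak_pullback (fun x => x) (fun x => g1 (g2 x)) g2 f ->
  is_weak_pullback (fun x => x) (fun x => fmap T g1 (fmap T g2 x)) (fmap T g2) (fmap T f).
Proof.
  intro H. apply (proj1 HT) in H. rewrite fmap_id_f, fmap_comp_f in H. exact H.
Qed.

Lemma split3 (T : Monad) (HT : weakly_cartesian T) (Hsp : strictly_positive T) A e n : forall i, i <= n ->
  is_weak_pullback (fun x => x) (fun x => @bar_degen T A (S n) (S i) (@bar_degen T A n i x))
    (@bar_degen T A n i) (@bar_face T A e (S n) (S i)).
Proof.
  induction n; intros i Hi.
  - assert (i = 0) by lia. subst. simpl.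
    apply lift3; auto. split.
    + intro a. symmetry. apply mu_eta_l.
    + intros b c H. exists b. split; auto. symmetry. apply Hsp. auto.
  - destruct (Nat.eq_dec i (S n)).
    + subst. rewrite degen_top. rewrite degen_top.
      rewrite (face_lift T A e (S n) _) by lia. rewrite face_diag.
      apply lift3; auto. split.
      * intro a. symmetry. apply mu_eta_l.
      * intros b c H. exists b. split; auto. symmetry. apply Hsp. auto.
    + rewrite (degen_lift T A (n) (i)) by lia.
      rewrite (degen_lift T A (S n) (S i)) by lia.
      rewrite (face_lift T A e (S n) (S i)) by lia.
      apply lift3; auto. apply IHn; lia.
Qed.

Theorem proposition5p6 (T : Monad) (HT : weakly_cartesian T)
  (Hsp : strictly_positive T) (A : Type) (e : T A -> A)
  (He : @is_algebra T A e) :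
  @inner_span_complete (BarX T A) (@bar_face T A e)
  /\ @split (BarX T A) (@bar_face T A e) (@bar_degen T A).
Proof.
  split; [|split; [|split]].
  - intros k i j H1 H2. apply isc; auto.
  - intros k i j H1 H2. apply pb_of_wp. apply split1; auto.
    intros a a' H. rewrite <- (face_degen T A e He (S k) j a) by lia.
    rewrite H. apply face_degen; auto.
  - intros k i j H1 H2. apply pb_of_wp. apply split2; auto.
    intros a a' H. rewrite <- (face_degen T A e He (S k) j a) by lia.
    rewrite H. apply face_degen; auto; lia.
  - intros n i Hi. apply pb_of_wp_f. apply split3; auto.
    intros a a' H. exact H.
Qed.
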